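(* Let $V$ be a finite vector space over a finite field and let $d$ be an integral metric on $V$. Then $d$ is convex if and only if $d$ is both correction-normal and equal-detection-normal.
   Context: An integral metric on $V$ is a metric $d:V\times V\to\mathbb{N}\cup\{\infty\}$ (non-negative, $d(x,y)=0\iff x=y$, symmetric, triangle inequality). For $v\in V$ and $\rho\in\mathbb{N}$ put $B_\rho(v)=\{x: d(v,x)\le\rho\}$, $S_\rho(v)=\{x:d(v,x)=\rho\}$, and $B_{-1}(v)=\emptyset$. The metric $d$ is (integrally) convex if for all $v_1,v_2\in V$ with $d(v_1,v_2)<\infty$ and all $i\in\{0,1,\dots,d(v_1,v_2)\}$ there exists $x\in V$ with $d(v_1,x)=i$ and $d(x,v_2)=d(v_1,v_2)-i$. For distinct $v_1,v_2$, the correction capability $\tau(v_1,v_2)$ is the largest integer $\tau$ with $B_\tau(v_1)\cap B_\tau(v_2)=\emptyset$; $d$ is correction-normal if $\tau(v_1,v_2)=\lfloor (d(v_1,v_2)-1)/2\rfloor$ for all distinct $v_1,v_2$. The equal-detection threshold $\sigma_{\mathrm{eq}}(v_1,v_2)$ is the unique $s\in\mathbb{N}$ (if it exists) with $B_s(v_1)\cap B_{s-1}(v_2)=B_{s-1}(v_1)\cap B_s(v_2)=\emptyset$ and $S_s(v_1)\cap S_s(v_2)\neq\emptyset$, and $\sigma_{\mathrm{eq}}(v_1,v_2)=0$ if no such $s$ exists; $d$ is equal-detection-normal if $d(v_1,v_2)=2\sigma_{\mathrm{eq}}(v_1,v_2)$ for all $v_1,v_2$ with $\sigma_{\mathrm{eq}}(v_1,v_2)\neq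 0$. *)

(* Defs.v *)
From mathcomp Require Import all_boot all_order all_algebra.
Set Implicit Arguments. Unset Strict Implicit. Unset Printing Implicit Defensive.

(* Extended naturals N ∪ {∞} are represented by [option nat], [None] = ∞. *)
Definition xle (a b : option nat) : bool :=
  match b, a with
  | None, _ => true
  | Some _, None => false
  | Some m, Some n => (n <= m)%N
  end.

Definition xadd (a b : option nat) : option nat :=
  match a, b with Some n, Some m => Some (n + m)%N | _, _ => None end.

Section Metric.
Variable V : Type.
Implicit Types (d : V -> V -> option nat) (v x : V).

Definition integral_metric d : Prop :=
  [/\ forall x y, d x y = Some 0%N <-> x = y,
      forall x y, d x y = d y x
    & forall x y z, xle (d x z) (xadd (d x y) (d y z))].

Definition ball d v (rho : nat) (x : V) : Prop :=
  exists n, d v x = Some n /\ (n <= rho)%N.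
(* B_{s-1}(v) for s : nat, with B_{-1}(v) = ∅ *)
Definition ball_pred d v (s : nat) (x : V) : Prop :=
  match s with 0 => False | s'.+1 => ball d v s' x end.
Definition sphere d v (rho : nat) (x : V) : Prop := d v x = Some rho.

Definition convex_metric d : Prop :=
  forall v1 v2 n, d v1 v2 = Some n ->
  forall i, (i <= n)%N ->
  exists x, d v1 x = Some i /\ d x v2 = Some (n - i)%N.

Definition balls_disjoint d v1 v2 (t : nat) : Prop :=
  forall x, ~ (ball d v1 t x /\ ball d v2 t x).

(* [corr_cap_is d v1 v2 t] : the correction capability τ(v1,v2) equals t,
   i.e. t is the largest integer with B_t(v1) ∩ B_t(v2) = ∅;
   t = None (∞) means the balls are disjoint for every radius.
   (For distinct v1, v2, B_0(v1) ∩ B_0(v2) = ∅, so τ ≥ 0 and nat suffices.) *)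
Definition corr_cap_is d v1 v2 (t : option nat) : Prop :=
  match t with
  | None => forall r, balls_disjoint d v1 v2 r
  | Some t => balls_disjoint d v1 v2 t /\ ~ balls_disjoint d v1 v2 t.+1
  end.

(* ⌊(d - 1)/2⌋ on N ∪ {∞} (only used for d >= 1) *)
Definition half_pred (a : option nat) : option nat :=
  match a with None => None | Some n => Some (n.-1./2) end.

Definition correction_normal d : Prop :=
  forall v1 v2, v1 <> v2 -> corr_cap_is d v1 v2 (half_pred (d v1 v2)).

Definition eq_det_cond d v1 v2 (s : nat) : Prop :=
  (forall x, ~ (ball d v1 s x /\ ball_pred d v2 s x)) /\
  (forall x, ~ (ball_pred d v1 s x /\ ball d v2 s x)) /\
  (exists x, sphere d v1 s x /\ sphere d v2 s x).

Definition sigma_eq_is d v1 v2 (s : nat) : Prop :=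
  (exists! s', eq_det_cond d v1 v2 s') /\ eq_det_cond d v1 v2 s \/
  ~ (exists! s', eq_det_cond d v1 v2 s') /\ s = 0%N.

Definition equal_detection_normal d : Prop :=
  forall v1 v2 s, sigma_eq_is d v1 v2 s -> s <> 0%N -> d v1 v2 = Some (2 * s)%N.

End Metric.

(* Main.v *)
Require Import Defs.
From mathcomp Require Import all_boot all_order all_algebra.
From mathcomp Require Import zify.
From Stdlib Require Import Classical.

Lemma hb n : 0 < n -> 2 * (n.-1./2) <= n - 1 /\ n - 1 <= 2 * (n.-1./2) + 1.
Proof.
case: n => // m _ /=; have := odd_double_half m; rewrite -muln2.
case: (odd m) => /=; lia.
Qed.

Section S.
Variable V : Type.
Variable d : V -> V -> option nat.
Hypothesis Hm : integral_metric d.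

Lemma dsym x y : d x y = d y x. Proof. by case: Hm. Qed.
Lemma dself x : d x x = Some 0. Proof. by case: Hm => H _ _; apply H. Qed.
Lemma d0 x y : d x y = Some 0 -> x = y. Proof. by case: Hm => H _ _; apply H. Qed.
Lemma tri x y z a b : d x y = Some a -> d y z = Some b ->
  exists c, d x z = Some c /\ (c <= a + b)%N.
Proof.
case: Hm => _ _ H Ha Hb; move: (H x y z); rewrite Ha Hb /=.
by case: (d x z) => [c|] //= Hc; exists c.
Qed.
Arguments tri {x y z a b}.

Lemma cond_uniq v1 v2 s s' : eq_det_cond d v1 v2 s -> eq_det_cond d v1 v2 s' -> s = s'.
Proof.
have key : forall s s', s < s' -> eq_det_cond d v1 v2 s -> eq_det_cond d v1 v2 s' -> False.
  move=> {}s {}s' Hlt [_ [_ [x [Hx1 Hx2]]]] [H1 _].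
  case: s' Hlt H1 => // s'' Hlt H1.
  apply: (H1 x); split; [exists s; split; [exact Hx1|lia]|].
  by exists s; split; [exact Hx2|lia].
move=> H1 H2; case: (ltngtP s s') => // Hl.
  by case: (key _ _ Hl H1 H2).
by case: (key _ _ Hl H2 H1).
Qed.

Lemma conv_cn : convex_metric d -> correction_normal d.
Proof.
move=> Hc v1 v2 Hne; rewrite /half_pred; case E: (d v1 v2) => [n|].
- have n0 : 0 < n.
    by case: n E => // E; case: Hne; apply: d0.
  have [h1 h2] := hb _ n0; set t := n.-1./2 in h1 h2 *.
  split.
  + move=> x [[a [Ha Hal]] [b [Hb Hbl]]]; rewrite dsym in Hb.
    have [c [Hc' Hcl]] := tri Ha Hb; rewrite E in Hc'; case: Hc' => ?; subst c; lia.
  + move=> Hdis.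
    have Hi : (n.-1./2).+1 <= n by lia.
    have [x [Hx1 Hx2]] := Hc v1 v2 n E _ Hi.
    apply: (Hdis x); split; [exists (n.-1./2).+1; split => //|].
    exists (n - (n.-1./2).+1); split; [by rewrite dsym|lia].
- move=> r x [[a [Ha _]] [b [Hb _]]]; rewrite dsym in Hb.
  have [c [Hc' _]] := tri Ha Hb; by rewrite E in Hc'.
Qed.

Lemma conv_ed : convex_metric d -> equal_detection_normal d.
Proof.
move=> Hc v1 v2 s [[_ Hs]|[_ ->]] // s0.
move: Hs => [H1 [H2 [x [Hx1 Hx2]]]].
rewrite /sphere in Hx1 Hx2; rewrite dsym in Hx2.
have [n [En Hnl]] := tri Hx1 Hx2; rewrite En; congr Some.
apply/eqP; rewrite eqn_leq; apply/andP; split; first by lia.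
rewrite leqNgt; apply/negP => Hlt.
case: s s0 H1 H2 Hx1 Hx2 Hnl Hlt => // s' _ H1 H2 Hx1 Hx2 Hnl Hlt.
have Hk : n - minn n s' <= n by lia.
have [y [Hy1 Hy2]] := Hc v1 v2 n En _ Hk.
apply: (H1 y); split; [exists (n - minn n s'); split => //; lia|].
exists (n - (n - minn n s')); split; [by rewrite dsym|lia].
Qed.

Lemma split_ex : correction_normal d -> equal_detection_normal d ->
  forall v1 v2 n, d v1 v2 = Some n -> 2 <= n ->
  exists y a, d v1 y = Some a /\ d y v2 = Some (n - a) /\ 0 < a < n.
Proof.
move=> Hcn Hed v1 v2 n E n2.
have Hne : v1 <> v2.
  by move=> eq; rewrite eq dself in E; case: E => ?; subst; lia.
have := Hcn v1 v2 Hne; rewrite E /= => [[_ Hnd]].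
have [ht1 ht2] := hb _ (ltnW n2).
set t := n.-1./2 in Hnd ht1 ht2.
have [x [[a [Ha Hal]] [b [Hb Hbl]]]] : exists x, ball d v1 t.+1 x /\ ball d v2 t.+1 x.
  by apply: NNPP => Hn; apply: Hnd => x Hx; apply: Hn; exists x.
rewrite dsym in Hb.
have [c [Hc Hcl]] := tri Ha Hb; rewrite E in Hc; case: Hc => ?; subst c.
case: (eqVneq (a + b) n) => Hab.
- exists x, a; split => //; split; [by rewrite Hb; congr Some; lia | lia].
- have [Hodd [Ha' Hb']] : n = 2 * t + 1 /\ a = t.+1 /\ b = t.+1 by lia.
  apply: NNPP => Hno.
  have Hcond : eq_det_cond d v1 v2 t.+1.
    split; [|split].
    + move=> y [[a' [Ha2 Ha'l]]] /= [b' [Hb2 Hb'l]]; apply: Hno.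
      rewrite dsym in Hb2.
      have [c [Hc Hcl2]] := tri Ha2 Hb2; rewrite E in Hc; case: Hc => ?; subst c.
      exists y, a'; split => //; split; [by rewrite Hb2; congr Some; lia | lia].
    + move=> y [] /= [a' [Ha2 Ha'l]] [b' [Hb2 Hb'l]]; apply: Hno.
      rewrite dsym in Hb2.
      have [c [Hc Hcl2]] := tri Ha2 Hb2; rewrite E in Hc; case: Hc => ?; subst c.
      exists y, a'; split => //; split; [by rewrite Hb2; congr Some; lia | lia].
    + exists x; rewrite /sphere; split; first by rewrite Ha Ha'.
      by rewrite dsym Hb Hb'.
  have Hs : sigma_eq_is d v1 v2 t.+1.
    left; split => //; exists t.+1; split => // s' Hs'.
    exact: cond_uniq Hcond Hs'.
  have := Hed v1 v2 t.+1 Hs (ltac:(by [])); rewrite E => [[]]; lia.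
Qed.

Arguments split_ex _ _ {v1 v2 n}.
Arguments cond_uniq {v1 v2 s s'}.

Lemma cn_conv : correction_normal d -> equal_detection_normal d -> convex_metric d.
Proof.
move=> Hcn Hed.
suff H : forall n v1 v2, d v1 v2 = Some n -> forall i, i <= n ->
  exists x, d v1 x = Some i /\ d x v2 = Some (n - i).
  by move=> v1 v2 n; apply: H.
elim/ltn_ind => n IH v1 v2 E i Hi.
case: (ltnP n 2) => Hn2.
- case: (eqVneq i 0) => [->|i0].
    by exists v1; rewrite dself E subn0.
  have -> : i = n by lia.
  by exists v2; rewrite E dself subnn.
- have [y [a [Ha [Hb /andP [Ha0 Han]]]]] := split_ex Hcn Hed E Hn2.
  case: (leqP i a) => Hia.
  + have [x [Hx1 Hx2]] := IH a Han v1 y Ha i Hia.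
    exists x; split => //.
    have [c [Hc Hcl]] := tri Hx2 Hb; rewrite Hc; congr Some.
    have [e [He Hel]] := tri Hx1 Hc; rewrite E in He; case: He => ?; subst; lia.
  + have Hl : n - a < n by lia.
    have Hl2 : i - a <= n - a by lia.
    have [x [Hx1 Hx2]] := IH (n - a) Hl y v2 Hb (i - a) Hl2.
    have [c [Hc Hcl]] := tri Ha Hx1.
    exists x; split; last by rewrite Hx2; congr Some; lia.
    rewrite Hc; congr Some.
    have [e [He Hel]] := tri Hc Hx2; rewrite E in He; case: He => ?; subst; lia.
Qed.

End S.

Theorem proposition3p1 (F : finFieldType) (V : finLmodType F)
    (d : V -> V -> option nat) :
  integral_metric d ->
  (convex_metric d <-> correction_normal d /\ equal_detection_normal d).
Proof.
move=> Hm; split.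
- by move=> Hc; split; [apply: conv_cn | apply: conv_ed].
- by move=> [H1 H2]; apply: cn_conv.
Qed.
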